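(* If $\xi<\varepsilon_{\Omega+1}$ is a limit ordinal and $\theta<\Omega$, then $\theta\le(\xi[\theta])^*\le\max\{\xi^*,\theta\}$.
   Context: $\Omega$ is the first uncountable ordinal; $\varepsilon_{\Omega+1}$ the least $\varepsilon>\Omega$ with $\omega^\varepsilon=\varepsilon$. Every $0<\xi<\varepsilon_{\Omega+1}$ has a unique $\Omega$-normal form $\xi=\Omega^{\alpha}\beta+\gamma$ with $0<\beta<\Omega$, $\gamma<\Omega^{\alpha}$. Coefficients: $C(0)=\{0\}$, $C(\Omega^\alpha\beta+\gamma)=C(\alpha)\cup C(\gamma)\cup\{\beta\}$; $\xi^*=\max C(\xi)$. For $\xi<\varepsilon_{\Omega+1}$ and $\theta<\Omega$, $\xi[\theta]$ is defined recursively on $\Omega$-normal forms: $0[\theta]=1[\theta]=0$; $(\Omega^\alpha\beta+\gamma)[\theta]=\Omega^\alpha\beta+\gamma[\theta]$ if $\gamma>0$; $(\Omega^\alpha\beta)[\theta]=\Omega^\alpha\theta$ if $\beta$ is a limit; $\Omega^{\alpha+1}[\theta]=\Omega^\alpha\theta$; $(\Omega^\alpha(\beta+1))[\theta]=\Omega^\alpha\beta+(\Omega^\alpha)[\theta]$ if $\beta>0$; $\Omega^\alpha[\theta]=\Omega^{\alpha[\theta]}$ if $\alpha$ is a limit. *)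

(* Defs.v *)
From HB Require Import structures.
From mathcomp Require Import all_boot all_order.
From Stdlib Require Import ClassicalEpsilon.
Set Implicit Arguments. Unset Strict Implicit. Unset Printing Implicit Defensive.
Import Order.TTheory.
Local Open Scope order_scope.

(* The first uncountable ordinal Omega, given as (the set of countable
   ordinals, i.e. the elements below Omega, as) a totally ordered type W
   with least element \bot (= 0) which is well-founded, uncountable, and all
   of whose proper initial segments are countable.  This characterizes Omega
   up to order isomorphism. *)
Definition first_uncountable {d} (W : bOrderType d) : Prop :=
  well_founded (fun x y : W => x < y)
  /\ (~ exists f : W -> nat, injective f)
  /\ (forall b : W, exists f : W -> nat,
        forall x y : W, x < b -> y < b -> f x = f y -> x = y).

(* Omega-normal-form terms:  Plus a b g  denotes  Omega^a * b + g. *)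
Inductive term (W : Type) : Type :=
| Zero : term W
| Plus : term W -> W -> term W -> term W.
Arguments Zero {W}.

Section Defs.
Context {d : Order.disp_t} {W : bOrderType d}.

Definition is_succ_of (c b : W) : Prop := c < b /\ forall e, c < e -> b <= e.
Definition succW (c : W) : W := epsilon (inhabits c) (is_succ_of c).
Definition oneW : W := succW \bot.
Definition limitW (b : W) : Prop := b <> \bot /\ ~ exists c, is_succ_of c b.
Definition predW (b : W) : W := epsilon (inhabits \bot) (fun c => is_succ_of c b).

Fixpoint ltT (x y : term W) : Prop :=
  match x, y with
  | Zero, Zero => False
  | Zero, Plus _ _ _ => True
  | Plus _ _ _, Zero => False
  | Plus a b g, Plus a' b' g' =>
      ltT a a' \/ (a = a' /\ (b < b' \/ (b = b' /\ ltT g g')))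
  end.

Definition omega_pow (a : term W) : term W := Plus a oneW Zero.

(* xi = Omega^a b + g is in Omega-normal form: 0 < b < Omega, g < Omega^a,
   a and g in normal form.  Normal-form terms are exactly the ordinals
   below epsilon_{Omega+1}. *)
Fixpoint NF (x : term W) : Prop :=
  match x with
  | Zero => True
  | Plus a b g => NF a /\ \bot < b /\ NF g /\ ltT g (omega_pow a)
  end.

Fixpoint succT (x : term W) : term W :=
  match x with
  | Zero => Plus Zero oneW Zero
  | Plus a b g =>
      match g with
      | Zero =>
          match a with
          | Zero => Plus Zero (succW b) Zero
          | Plus _ _ _ => Plus a b (Plus Zero oneW Zero)
          end
      | Plus _ _ _ => Plus a b (succT g)
      end
  end.

Definition is_limit (x : term W) : Prop :=
  x <> Zero /\ forall y, NF y -> x <> succT y.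

Definition predT (x : term W) : term W :=
  epsilon (inhabits Zero) (fun y => NF y /\ x = succT y).

Definition mono (a : term W) (t : W) : term W :=
  if t == \bot then Zero else Plus a t Zero.

Definition decP (P : Prop) : bool :=
  if excluded_middle_informative P then true else false.

(* the fundamental sequence  xi[t] *)
Fixpoint fs (t : W) (x : term W) : term W :=
  match x with
  | Zero => Zero
  | Plus a b g =>
      (* om = (Omega^a)[t] *)
      let om :=
        match a with
        | Zero => Zero
        | Plus _ _ _ =>
            if decP (is_limit a) then Plus (fs t a) oneW Zero
            else mono (predT a) t                          (* Omega^{a'+1}[t] = Omega^{a'} t *)
        end in
      match g with
      | Plus _ _ _ => Plus a b (fs t g)
      | Zero =>
          if decP (limitW b) then mono a t
          else if predW b == \bot then om
          else Plus a (predW b) om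
      end
  end.

Fixpoint star (x : term W) : W :=
  match x with
  | Zero => \bot
  | Plus a b g => Order.max (star a) (Order.max b (star g))
  end.

End Defs.

(* Main.v *)
Require Import Defs.
From HB Require Import structures.
From mathcomp Require Import all_boot all_order.
From Stdlib Require Import Classical ClassicalEpsilon.
Import Order.TTheory.

Section S.
Local Open Scope order_scope.
Context {d : Order.disp_t} {W : bOrderType d}.
Variable HW : first_uncountable W.
Implicit Types (x y z a g : term W) (b : W).

Lemma ltT_trans x y z : ltT x y -> ltT y z -> ltT x z.
Proof.
elim: x y z => [|a IHa b g IHg] [|a' b' g'] [|a'' b'' g''] //=.
move=> [H1|[E1 H1]] [H2|[E2 H2]]; subst.
- left; exact: IHa H1 H2.
- by left.
- by left.
- right; split=>//. case: H1 => [H1|[E1 H1]]; case: H2 => [H2|[E2 H2]]; subst.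
  + left; exact: lt_trans H1 H2.
  + by left.
  + by left.
  + right; split=>//; exact: IHg H1 H2.
Qed.

Lemma exists_gt (c : W) : exists e, c < e.
Proof.
case: (classic (exists e, c < e)) => // H; exfalso.
case: HW => _ [Hinj Hcount]; case: (Hcount c) => f Hf.
have Hle : forall e, e <= c.
  by move=> e; rewrite leNgt; apply/negP => He; apply: H; exists e.
apply: Hinj; exists (fun u : W => if u == c then 0%N else (f u).+1) => u v /=.
case: eqP => [->|nx]; case: eqP => [->|ny] //.
case => /Hf; apply; rewrite lt_neqAle Hle andbT; exact/eqP.
Qed.

Lemma succ_ex (c : W) : exists s, is_succ_of c s.
Proof.
case: (exists_gt c) => e ce.
case: HW => wf _.
move: e ce.
refine (well_founded_ind wf (fun e => c < e -> exists s, is_succ_of c s) _).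
move=> e IH ce.
case: (classic (exists e', c < e' /\ e' < e)) => [[e' [h1 h2]]|H].
- exact: IH h2 h1.
- exists e; split=>// e' ce'. rewrite leNgt; apply/negP => h; apply H; eauto.
Qed.

Lemma succW_spec (c : W) : is_succ_of c (succW c).
Proof. rewrite /succW; apply: epsilon_spec; exact: succ_ex. Qed.

Lemma succ_uniq (c b1 b2 : W) : is_succ_of c b1 -> is_succ_of c b2 -> b1 = b2.
Proof. move=> [h1 H1] [h2 H2]; apply/le_anti; by rewrite (H1 _ h2) (H2 _ h1). Qed.

Lemma predW_spec (b : W) : (exists c, is_succ_of c b) -> is_succ_of (predW b) b.
Proof. by move=> h; exact: (epsilon_spec _ _ h). Qed.

Lemma oneW_le (b : W) : \bot < b -> oneW <= b.
Proof. by move=> h; case: (succW_spec \bot) => _; apply. Qed.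

Lemma notlimit (b : W) : \bot < b -> ~ limitW b -> exists c, is_succ_of c b.
Proof.
move=> hb hl; apply: NNPP => hn; apply: hl; split=>//.
by move=> eb; move: hb; rewrite eb ltxx.
Qed.

Lemma decPE (P : Prop) : (Defs.decP P = true /\ P) \/ (Defs.decP P = false /\ ~ P).
Proof. rewrite /Defs.decP; case: excluded_middle_informative; tauto. Qed.

Lemma max_mono (u v v' : W) : v <= v' -> Order.max u v <= Order.max u v'.
Proof. by move=> h; rewrite ge_max !le_max lexx /= h !orbT. Qed.

Lemma ltT_succT y : ltT y (succT y).
Proof.
elim: y => [|a _ b g IHg] /=; first done.
case: g IHg => [|a' b' g'] IHg.
- case: a => [|a1 b1 g1] /=.
  + right; split=>//; left; by case: (succW_spec b).
  + right; split=>//; right; split=>//.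
- right; split=>//; right; split=>//.
Qed.

Lemma star_succT y : star y <= star (succT y).
Proof.
elim: y => [|a _ b g IHg] /=; first exact: le0x.
case: g IHg => [|a' b' g'] IHg.
- case: a => [|a1 b1 g1] /=.
  + have := succW_spec b; case=> /ltW h _.
    by rewrite !ge_max !le_max !le0x /= h !orbT.
  + by rewrite !ge_max !le_max !lexx !le0x !orbT.
- apply: max_mono; apply: max_mono; exact: IHg.
Qed.

Lemma limit_tail a b g : NF (Plus a b g) -> g <> Zero -> is_limit (Plus a b g) -> is_limit g.
Proof.
move=> [NFa [hb [NFg ltg]]] gz [_ Hl]; split=>// y NFy Ey.
case: y NFy Ey => [|a1 b1 g1] NFy Ey.
- move: ltg; rewrite Ey /omega_pow /= => ltg.
  case: a NFa ltg Hl => [|a2 b2 g2] NFa ltg Hl.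
  + case: ltg => [//|[_ [|[_ //]]]]; by rewrite ltxx.
  + apply: (Hl (Plus (Plus a2 b2 g2) b Zero)); first by split; [exact: NFa|split; [exact: hb|by split]].
    by rewrite Ey.
- apply: (Hl (Plus a b (Plus a1 b1 g1))).
  + split; [exact: NFa|split; [exact: hb|split; [exact: NFy|]]]. apply: ltT_trans (ltT_succT _) _; by rewrite -Ey.
  + by rewrite Ey.
Qed.

Lemma limit_last a b : NF (Plus a b Zero) -> is_limit (Plus a b Zero) -> ~ limitW b -> a <> Zero.
Proof.
move=> [_ [hb _]] [_ Hl] hlb az; subst.
case: (@notlimit _ hb hlb) => c hc.
case: (eqVneq c \bot) => [ec|nc].
- subst; apply: (Hl Zero) => //=.
  have -> : b = oneW by exact: (@succ_uniq _ _ _ hc (succW_spec _)).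
  done.
- apply: (Hl (Plus Zero c Zero)).
  + split=>//; split; last by split. by rewrite lt_neqAle eq_sym nc le0x.
  + by rewrite /= (@succ_uniq _ _ _ hc (succW_spec c)).
Qed.

Lemma main_lemma xi (t : W) : NF xi -> is_limit xi ->
  t <= star (fs t xi) /\ star (fs t xi) <= Order.max (star xi) t.
Proof.
elim: xi => [|a IHa b g IHg]; first by move=> _ [].
move=> NFxi Hlim. have := NFxi => -[NFa [hb [NFg ltg]]].
case: g IHg NFg ltg NFxi Hlim => [|a' b' g'] IHg NFg ltg NFxi Hlim; last first.
- have Hg := @limit_tail _ _ _ NFxi (ltac:(by [])) Hlim.
  case: (IHg NFg Hg) => h1 h2.
  change (fs t (Plus a b (Plus a' b' g'))) with (Plus a b (fs t (Plus a' b' g'))).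
  set F := fs t _; set G := Plus a' b' g'.
  change (star (Plus a b F)) with (Order.max (star a) (Order.max b (star F))).
  change (star (Plus a b G)) with (Order.max (star a) (Order.max b (star G))).
  move: h1 h2; rewrite /F /G.
  move: (star a) (star (fs t (Plus a' b' g'))) (star (Plus a' b' g')) => sa sF sG h1 h2.
  split; first by rewrite !le_max h1 !orbT.
  rewrite !ge_max !le_max !lexx !orbT /=.
  by move: h2; rewrite le_max => /orP[->|->]; rewrite !orbT.
have hM : forall u : W, u <= star (Plus a b Zero) \/ u <= t ->
    u <= Order.max (star (Plus a b Zero)) t.
  by move=> u [h|h]; rewrite le_max h ?orbT.
move: hM; rewrite [star (Plus a b Zero)]/= => hM.
rewrite [fs t _]/=; case: (decPE (limitW b)) => [[-> Hb]|[-> Hb]].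
- rewrite /mono; case: eqP => [->|nt]; first by split; rewrite /= ?le0x.
  rewrite [star _]/=; split; first by rewrite !le_max lexx !orbT.
  rewrite !ge_max; apply/andP; split; first by apply: hM; left; rewrite le_max lexx.
  rewrite le0x andbT; apply: hM; by right.
have az := @limit_last _ _ NFxi Hlim Hb.
have hpb := @predW_spec _ (@notlimit _ hb Hb).
case: hpb => hpb _.
clear ltg IHg; case: a az IHa NFa NFxi Hlim hM => [//|a1 b1 g1] _ IHa NFa NFxi Hlim hM.
set A := Plus a1 b1 g1 in IHa NFa NFxi Hlim hM *.
have [P1 P2] : t <= star (if Defs.decP (is_limit A)
                           then Plus (fs t A) oneW Zero else mono (Defs.predT A) t) /\
                star (if Defs.decP (is_limit A)
                           then Plus (fs t A) oneW Zero else mono (Defs.predT A) t)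
                 <= Order.max (Order.max (star A) (Order.max b \bot)) t.
  case: (decPE (is_limit A)) => [[-> Ha]|[-> Ha]].
  - case: (IHa NFa Ha) => i1 i2.
    rewrite [star (Plus _ _ _)]/=; split; first by rewrite le_max i1.
    rewrite !ge_max le0x !andbT; apply/andP; split.
    + move: i2; rewrite le_max => /orP[h|h]; apply: hM; [left|right] => //.
      by rewrite le_max h.
    + apply: hM; left; rewrite !le_max (@oneW_le _ hb) !orbT //.
  - have [NFp Ep] : NF (Defs.predT A) /\ A = succT (Defs.predT A).
      rewrite /Defs.predT; apply: (epsilon_spec (inhabits Zero) (fun y => NF y /\ A = succT y)).
      apply: NNPP => hn; apply: Ha; split=>// y NFy Ey; apply: hn; by exists y.
    have sp := star_succT (Defs.predT A); rewrite -Ep in sp.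
    rewrite /mono; case: eqP => [->|nt]; first by split; apply: le0x.
    rewrite [star (Plus _ _ _)]/=; split; first by rewrite !le_max lexx !orbT.
    rewrite !ge_max le0x !andbT; apply/andP; split.
    + by apply: hM; left; rewrite le_max sp.
    + by apply: hM; right.
move: P1 P2; set om := (if _ then _ else _) => P1 P2.
case: eqP => _; first by split.
change (star (Plus A (predW b) om)) with (Order.max (star A) (Order.max (predW b) (star om))).
split; first by rewrite !le_max P1 !orbT.
rewrite ge_max; apply/andP; split.
- by apply: hM; left; rewrite le_max lexx.
- rewrite ge_max; apply/andP; split=>//.
  by apply: hM; left; rewrite !le_max (ltW hpb) !orbT.
Qed.

End S.

Theorem lemma2p2 (d : Order.disp_t) (W : bOrderType d)
  (HW : first_uncountable W) (xi : term W) (theta : W) :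
  NF xi -> is_limit xi ->
  (theta <= star (fs theta xi))%O /\
  (star (fs theta xi) <= Order.max (star xi) theta)%O.
Proof. exact: main_lemma. Qed.
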